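(* Let $(\mathcal X,d)$ be a metric space, $f:[n]\to\mathcal X$ a feature and $1\le k\le n$. Let $\mathcal R_{k,n}$ be the distribution of a multiset $S=\{i_1,\dots,i_k\}$ obtained by drawing $i_1,\dots,i_k$ independently and uniformly from $[n]$ (sampling with replacement). Then $$\mathbb E_{S\sim\mathcal U_{k,n}}\big[W(\phi_f^{[n]},\phi_f^S)\big]\le\mathbb E_{S\sim\mathcal R_{k,n}}\big[W(\phi_f^{[n]},\phi_f^S)\big].$$
   Context: For a nonempty set or multiset $S$ of elements of $[n]$, $\phi_f^S=\frac1{|S|}\sum_{i\in S}\delta(f(i))$ (counted with multiplicity), where $\delta(\cdot)$ is a Dirac mass. For finitely supported distributions $\phi,\psi$ on $\mathcal X$, $W(\phi,\psi)=\min_{\gamma}\mathbb E_{(x,y)\sim\gamma}[d(x,y)]$, minimum over couplings $\gamma$ of $\phi,\psi$ (Wasserstein-1 distance). $\mathcal U_{k,n}$ is the uniform distribution over size-$k$ subsets of $[n]$ (sampling without replacement). *)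

(* Defs.v *)
From HB Require Import structures.
From mathcomp Require Import all_boot all_order all_algebra.
From mathcomp Require Import boolp classical_sets reals.
Set Implicit Arguments. Unset Strict Implicit. Unset Printing Implicit Defensive.
Import Order.TTheory GRing.Theory Num.Theory.
Local Open Scope ring_scope.
Local Open Scope classical_set_scope.

Section Defs.
Variables (R : realType) (T : Type).

Definition is_metric (d : T -> T -> R) : Prop :=
  [/\ forall x, d x x = 0,
      forall x y, d x y = 0 -> x = y,
      forall x y, d x y = d y x &
      forall x y z, d x z <= d x y + d y z].

(* phi_f^S : the empirical distribution (1/|S|) sum_{i in S} delta(f i),
   counted with multiplicity; S is a (multi)set given as a sequence of indices. *)
Definition empirical (n : nat) (f : 'I_n -> T) (S : seq 'I_n) : T -> R :=
  fun x => (count (fun i => `[< f i = x >]) S)%:R / (size S)%:R.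

(* A finitely supported coupling on T x T, given as a finite list of
   weighted atoms ((x, y), w); its mass at (x,y) is the total weight of
   the atoms at (x,y). *)
Definition is_coupling (phi psi : T -> R) (g : seq ((T * T) * R)) : Prop :=
  [/\ all (fun p => 0 <= p.2) g,
      forall x, \sum_(p <- g | `[< p.1.1 = x >]) p.2 = phi x &
      forall y, \sum_(p <- g | `[< p.1.2 = y >]) p.2 = psi y].

Definition coupling_cost (d : T -> T -> R) (g : seq ((T * T) * R)) : R :=
  \sum_(p <- g) p.2 * d p.1.1 p.1.2.

(* Wasserstein-1 distance: optimal expected cost over couplings
   (the minimum is attained; we write it as an infimum). *)
Definition W1 (d : T -> T -> R) (phi psi : T -> R) : R :=
  inf [set c | exists g, is_coupling phi psi g /\ c = coupling_cost d g].

Definition EW_without (d : T -> T -> R) (n k : nat) (f : 'I_n -> T) : R :=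
  (\sum_(A : {set 'I_n} | #|A| == k)
      W1 d (empirical f (enum 'I_n)) (empirical f (enum A))) / ('C(n, k))%:R.

(* E_{S ~ R_{k,n}} [ W(phi_f^[n], phi_f^S) ] : k i.i.d. uniform draws *)
Definition EW_with (d : T -> T -> R) (n k : nat) (f : 'I_n -> T) : R :=
  (\sum_(t : k.-tuple 'I_n)
      W1 d (empirical f (enum 'I_n)) (empirical f (tval t))) / (n ^ k)%:R.

End Defs.

(* Main.v *)
Require Import Defs.
From HB Require Import structures.
From mathcomp Require Import all_boot all_order all_algebra.
From mathcomp Require Import boolp classical_sets reals.
From mathcomp Require Import ring lra.
Import Order.TTheory GRing.Theory Num.Theory.
Local Open Scope ring_scope.
Set Implicit Arguments. Unset Strict Implicit. Unset Printing Implicit Defensive.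

Section W1.
Local Open Scope classical_set_scope.
Variables (R : realType) (T : Type) (d : T -> T -> R).
Hypothesis d0 : forall x y, 0 <= d x y.

Lemma cost_ge0 g : all (fun p => 0 <= p.2) g -> 0 <= coupling_cost d g.
Proof.
rewrite /coupling_cost; elim: g => [|p g IH]; first by rewrite big_nil.
rewrite big_cons /= => /andP [p0 /IH]; apply: addr_ge0; exact: mulr_ge0.
Qed.

Lemma all_flat (X : Type) (a : pred X) (ss : seq (seq X)) :
  all a (flatten ss) = all (all a) ss.
Proof. by elim: ss => //= s ss IH; rewrite all_cat IH. Qed.

Lemma W1_has_lb phi psi :
  has_lbound [set c | exists g, is_coupling phi psi g /\ c = coupling_cost d g].
Proof. by exists 0 => c [g [[Hg _ _] ->]]; exact: cost_ge0. Qed.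

Lemma W1_le phi psi g : is_coupling phi psi g -> W1 d phi psi <= coupling_cost d g.
Proof. by move=> Hg; apply: (ge_inf (W1_has_lb phi psi)); exists g. Qed.

Lemma W1_adh phi psi eps : 0 < eps -> (exists g, is_coupling phi psi g) ->
  exists g, is_coupling phi psi g /\ coupling_cost d g < W1 d phi psi + eps.
Proof.
move=> e0 [g0 H0].
have hi : has_inf [set c | exists g, is_coupling phi psi g /\ c = coupling_cost d g].
  by split; [exists (coupling_cost d g0), g0|exact: W1_has_lb].
have [c [g [Hg ->]] lt] := inf_adherent e0 hi.
by exists g.
Qed.

Definition sc (c : R) (p : (T * T) * R) := (p.1, c * p.2).

Lemma sum_sc c s (Q : pred (T * T)) (F : T * T -> R) :
  \sum_(p <- map (sc c) s | Q p.1) p.2 * F p.1 = c * \sum_(p <- s | Q p.1) p.2 * F p.1.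
Proof. by rewrite big_map mulr_sumr; apply: eq_bigr => p _ /=; rewrite mulrA. Qed.

Lemma sum_sc1 c s (Q : pred (T * T)) :
  \sum_(p <- map (sc c) s | Q p.1) p.2 = c * \sum_(p <- s | Q p.1) p.2.
Proof. by rewrite big_map mulr_sumr. Qed.

Lemma W1_convex (I : finType) (P : pred I) (a : I -> R) (nu : I -> T -> R)
  (mu nu0 : T -> R) :
  (forall i, P i -> 0 <= a i) -> \sum_(i | P i) a i = 1 ->
  (forall y, nu0 y = \sum_(i | P i) a i * nu i y) ->
  (forall i, P i -> exists g, is_coupling mu (nu i) g) ->
  W1 d mu nu0 <= \sum_(i | P i) a i * W1 d mu (nu i).
Proof.
move=> a0 a1 Hnu Hex; apply/ler_addgt0Pr => e e0.
have: forall i, exists g, P i -> is_coupling mu (nu i) g /\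
    coupling_cost d g < W1 d mu (nu i) + e.
  move=> i; case: (boolP (P i)) => Pi; last by exists [::].
  by have [g Hg] := W1_adh e0 (Hex i Pi); exists g.
case/choice => G HG.
pose g := flatten [seq if P i then map (sc (a i)) (G i) else [::] | i <- index_enum I].
have Hc : is_coupling mu nu0 g.
  split.
  - rewrite all_flat all_map; apply/allT => i /=.
    case: ifP => // Pi; rewrite all_map.
    have [[Hn _ _] _] := HG i Pi.
    by apply: sub_all Hn => q /= q0; apply: mulr_ge0 (a0 i Pi) q0.
  - move=> x; rewrite big_flatten big_map big_mkcond /=.
    under eq_bigr => i _ do rewrite (fun_if (fun s => \sum_(p <- s | `[< p.1.1 = x >]) p.2)) big_nil.
    under eq_bigr => i _ do rewrite (sum_sc1 _ _ (fun q => `[< q.1 = x >])).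
    rewrite -big_mkcond /=.
    under eq_bigr => i Pi do (have [[_ -> _] _] := HG i Pi).
    by rewrite -mulr_suml a1 mul1r.
  - move=> y; rewrite big_flatten big_map big_mkcond /= Hnu.
    under eq_bigr => i _ do rewrite (fun_if (fun s => \sum_(p <- s | `[< p.1.2 = y >]) p.2)) big_nil.
    under eq_bigr => i _ do rewrite (sum_sc1 _ _ (fun q => `[< q.2 = y >])).
    rewrite -big_mkcond /=.
    by apply: eq_bigr => i Pi; have [[_ _ ->] _] := HG i Pi.
apply: le_trans (W1_le Hc) _.
rewrite /coupling_cost big_flatten big_map big_mkcond /=.
under eq_bigr => i _ do rewrite (fun_if (fun s => \sum_(p <- s) p.2 * d p.1.1 p.1.2)) big_nil.
under eq_bigr => i _ do rewrite (sum_sc _ _ predT (fun q => d q.1 q.2)).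
rewrite -big_mkcond /=.
rewrite -[e]mul1r -a1 mulr_suml -big_split /=.
apply: ler_sum => i Pi; rewrite -mulrDr; apply: ler_wpM2l; first exact: a0.
by have [_ /ltW] := HG i Pi.
Qed.

End W1.
Section C.
Variables (R : realType) (T : Type).

Lemma sum_cnt (X : Type) (s : seq X) (P : pred X) (c : R) :
  \sum_(i <- s | P i) c = (count P s)%:R * c.
Proof.
elim: s => [|x s IH]; first by rewrite big_nil mul0r.
rewrite big_cons IH /=; case: (P x) => /=; last by rewrite add0n.
by rewrite natrD mulrDl mul1r.
Qed.

Lemma sum_if (X : Type) (s : seq X) (P : pred X) (F : X -> R) :
  \sum_(i <- s) (if P i then F i else 0) = \sum_(i <- s | P i) F i.
Proof. by rewrite [RHS]big_mkcond. Qed.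

Lemma coupling_ex n (f : 'I_n -> T) (s1 s2 : seq 'I_n) :
  (0 < size s1)%N -> (0 < size s2)%N ->
  exists g, is_coupling (empirical R f s1) (empirical R f s2) g.
Proof.
move=> h1 h2.
have n1 : (size s1)%:R != 0 :> R by rewrite pnatr_eq0 -lt0n.
have n2 : (size s2)%:R != 0 :> R by rewrite pnatr_eq0 -lt0n.
pose c : R := ((size s1)%:R * (size s2)%:R)^-1.
exists [seq ((f i, f j), c) | i <- s1, j <- s2]; split.
- by apply/all_allpairsP => i j _ _ /=; rewrite invr_ge0 mulr_ge0.
- move=> x; rewrite big_mkcond big_allpairs_dep /=.
  have E : forall i, \sum_(j <- s2) (if `[< f i = x >] then c else 0) =
      (if `[< f i = x >] then (size s2)%:R * c else 0).
    by move=> i; case: ifP => _; [rewrite (@sum_cnt _ _ predT) count_predT | rewrite big1].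
  under eq_bigr => i _ do rewrite E.
  rewrite -big_mkcond sum_cnt /empirical /c; field.
  by rewrite n1 n2.
- move=> y; rewrite big_mkcond big_allpairs_dep /= exchange_big /=.
  have E : forall j, \sum_(i <- s1) (if `[< f j = y >] then c else 0) =
      (if `[< f j = y >] then (size s1)%:R * c else 0).
    by move=> j; case: ifP => _; [rewrite (@sum_cnt _ _ predT) count_predT | rewrite big1].
  under eq_bigr => j _ do rewrite E.
  rewrite -big_mkcond sum_cnt /empirical /c; field.
  by rewrite n1 n2.
Qed.
End C.
Lemma disjC (X : finType) (D C : {set X}) : D \subset ~: C -> D :&: C = @finset.set0 X.
Proof.
move=> /fintype.subsetP H; apply/setP => x; rewrite !inE.
by case Hx: (x \in D) => //=; have := H x Hx; rewrite inE => /negbTE.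
Qed.

Lemma card_super (X : finType) (C : {set X}) k : (#|C| <= k)%N ->
  #|[set B : {set X} | (C \subset B) && (#|B| == k)]| = 'C(#|X| - #|C|, k - #|C|).
Proof.
move=> Ck.
have -> : [set B : {set X} | (C \subset B) && (#|B| == k)] =
   (fun D : {set X} => D :|: C) @: [set D : {set X} | D \subset ~: C & #|D| == (k - #|C|)%N].
  apply/setP => B; rewrite inE; apply/andP/imsetP.
  - case=> CB /eqP kB; exists (B :\: C).
      by rewrite inE subsetDr cardsDS // kB /=.
    apply/setP => x; rewrite !inE; case Hx: (x \in C) => /=; last by rewrite ?orbF ?andbT.
    by rewrite (fintype.subsetP CB) ?orbT.
  - case=> D; rewrite inE => /andP [DC /eqP kD] ->; split; first exact: finset.subsetUr.
    have := cardsUI D C; rewrite disjC // cards0 addn0 => ->.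
    by rewrite kD subnK.
rewrite card_in_imset.
  by rewrite cards_draws; congr 'C(_, _); rewrite -(cardsC C) addKn.
move=> D1 D2; rewrite !inE => /andP [H1 _] /andP [H2 _] E.
have: (D1 :|: C) :\: C = (D2 :|: C) :\: C by rewrite E.
rewrite !finset.setDUl finset.setDv !finset.setU0.
have E1 : D1 :\: C = D1 by apply/finset.setDidPl; rewrite finset.disjoints_subset.
have E2 : D2 :\: C = D2 by apply/finset.setDidPl; rewrite finset.disjoints_subset.
by rewrite E1 E2.
Qed.
Lemma count_dec (X : finType) (Q : pred X) (s : seq X) :
  count Q s = (\sum_(j | Q j) count_mem j s)%N.
Proof.
elim: s => [|x s IH] /=; first by rewrite big1.
rewrite big_split /= IH; congr (_ + _)%N.
rewrite big_mkcond (bigD1 x) //= eqxx big1 ?addn0; first by case: (Q x).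
by move=> j /negbTE; rewrite eq_sym => ->; case: (Q j).
Qed.

Definition sw (X : eqType) (a b : X) (y : X) := if y == a then b else if y == b then a else y.

Lemma swK (X : eqType) (a b : X) : involutive (sw a b).
Proof.
move=> y; rewrite /sw; have [ya|ya] := eqVneq y a.
  by have [ba|ba] := eqVneq b a; rewrite ?eqxx ?ba ?ya.
have [yb|yb] := eqVneq y b; first by rewrite eqxx yb.
by rewrite (negbTE ya) (negbTE yb).
Qed.

Lemma sw_eq (X : eqType) (a b y : X) : (sw a b y == a) = (y == b).
Proof.
rewrite /sw; have [ya|ya] := eqVneq y a; first by rewrite ya eq_sym.
have [yb|yb] := eqVneq y b; first by rewrite eqxx.
by rewrite (negbTE ya).
Qed.

Lemma set_map_inj (X Y : finType) (g : X -> Y) (s : seq X) :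
  [set y in map g s] = g @: [set y in s].
Proof.
apply/setP => y; rewrite inE; apply/mapP/imsetP => [[x xs ->]|[x]].
  by exists x; rewrite ?inE.
by rewrite inE => xs ->; exists x.
Qed.

Lemma inj_map_tuple (X Y : Type) m (g : X -> Y) :
  injective g -> injective (@map_tuple m X Y g).
Proof. by move=> ig h1 h2 /(congr1 val) /= /(inj_map ig) E; apply: val_inj. Qed.

Lemma sym_count (R : realType) k (w : nat -> R) (Q : pred 'I_k) :
  \sum_(h : k.-tuple 'I_k) w #|[set y in h]| * (count Q h)%:R =
  (\sum_(h : k.-tuple 'I_k) w #|[set y in h]|) * (count Q (enum 'I_k))%:R.
Proof.
case: k w Q => [|k] w Q.
  have c0 : forall (s : seq 'I_0), count Q s = 0%N.
    by move=> s; apply/eqP; rewrite -leqn0; case: s => // [[]].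
  by rewrite c0 mulr0 big1 // => h _; rewrite c0 mulr0.
pose W (h : k.+1.-tuple 'I_k.+1) := w #|[set y in h]|.
pose c0 j := \sum_(h : k.+1.-tuple 'I_k.+1) W h * (count_mem j h)%:R.
have c0E : forall j j', c0 j = c0 j'.
  move=> j j'; rewrite /c0 (reindex_inj (inj_map_tuple (can_inj (swK j j')))) /=.
  apply: eq_bigr => h _; congr (_ * _).
    by rewrite /W set_map_inj card_imset //; exact: can_inj (swK j j').
  by rewrite count_map; congr (_%:R); apply: eq_count => y /=; rewrite sw_eq.
have kE : forall h : k.+1.-tuple 'I_k.+1, (\sum_j count_mem j h)%N = k.+1.
  by move=> h; rewrite -(count_dec predT) count_predT size_tuple.
have c0L : forall j, c0 j = \sum_(h : k.+1.-tuple 'I_k.+1) W h.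
  move=> j; apply: (@mulfI _ (k.+1)%:R); first by rewrite pnatr_eq0.
  have E1 : \sum_(i < k.+1) c0 i = (k.+1)%:R * c0 j.
    under eq_bigr => i _ do rewrite (c0E i j).
    by rewrite sumr_const card_ord mulr_natl.
  rewrite -E1 /c0 exchange_big mulr_sumr /=; apply: eq_bigr => h _.
  by rewrite -mulr_sumr -natr_sum kE mulrC.
under eq_bigr => h _ do rewrite count_dec natr_sum mulr_sumr.
rewrite exchange_big /= count_dec natr_sum mulr_sumr.
apply: eq_bigr => j _; rewrite -/(c0 j) c0L.
rewrite count_uniq_mem ?enum_uniq // mem_enum inE mulr1 //.
Qed.

Section Main.
Variables (R : realType) (T : Type) (n k : nat) (f : 'I_n -> T).
Hypotheses (hk1 : (1 <= k)%N) (hkn : (k <= n)%N).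

Definition sT (t : k.-tuple 'I_n) : {set 'I_n} := [set y in tval t].
Definition Nc (m : nat) : nat := 'C(n - m, k - m).
Definition Kw (A : {set 'I_n}) (t : k.-tuple 'I_n) : R :=
  (sT t \subset A)%:R * ((Nc #|sT t|)%:R)^-1.
Definition Lam : R :=
  \sum_(h : k.-tuple 'I_k) ((Nc #|[set y in tval h]|)%:R)^-1.

Lemma Nc_gt0 m : (m <= k)%N -> (0 < Nc m)%N.
Proof. by move=> mk; rewrite /Nc bin_gt0 leq_sub2r. Qed.

Lemma sT_le t : (#|sT t| <= k)%N.
Proof. by rewrite /sT cardsE -{2}(size_tuple t) card_size. Qed.

Lemma Kw_ge0 A t : 0 <= Kw A t.
Proof. by rewrite /Kw mulr_ge0 // invr_ge0. Qed.

Lemma rowK t : \sum_(A : {set 'I_n} | #|A| == k) Kw A t = 1.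
Proof.
rewrite /Kw -mulr_suml.
have -> : \sum_(A : {set 'I_n} | #|A| == k) (sT t \subset A)%:R =
    (#|[set B : {set 'I_n} | (sT t \subset B) && (#|B| == k)]|)%:R :> R.
  rewrite -sum1_card natr_sum big_mkcond [RHS]big_mkcond /=.
  by apply: eq_bigr => B _; rewrite inE andbC; case: (#|B| == k); case: (sT t \subset B).
rewrite card_super ?sT_le // card_ord -/(Nc _) mulfV // pnatr_eq0 -lt0n.
exact: Nc_gt0 (sT_le t).
Qed.

Lemma n_gt0 : (0 < n)%N. Proof. exact: leq_trans hkn. Qed.

Lemma enum_param (A : {set 'I_n}) : #|A| = k -> exists e : 'I_k -> 'I_n,
  [/\ injective e, enum A = map e (enum 'I_k), forall j, e j \in A &
      forall x, x \in A -> exists j, e j = x].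
Proof.
move=> hA; pose x0 := Ordinal n_gt0.
have hs : size (enum A) = k by rewrite -cardE.
exists (fun j => nth x0 (enum A) j); split.
- move=> i j /eqP; rewrite nth_uniq ?hs ?enum_uniq // => /eqP E.
  exact: val_inj.
- rewrite (map_comp (nth x0 (enum A)) val) val_enum_ord -{1}hs.
  by rewrite -[map _ (iota _ _)]/(mkseq _ _) mkseq_nth.
- by move=> j; rewrite -mem_enum mem_nth ?hs.
- move=> x; rewrite -mem_enum => /(nthP x0) [i ilt <-].
  by rewrite hs in ilt; exists (Ordinal ilt).
Qed.

Lemma reindexA (A : {set 'I_n}) (e : 'I_k -> 'I_n) : injective e ->
  (forall j, e j \in A) -> (forall x, x \in A -> exists j, e j = x) ->
  forall G : k.-tuple 'I_n -> R,
  \sum_(t : k.-tuple 'I_n) (sT t \subset A)%:R * G t =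
  \sum_(h : k.-tuple 'I_k) G (map_tuple e h).
Proof.
move=> ie eA Ae G.
pose j0 : 'I_k := Ordinal hk1.
pose e' x := odflt j0 [pick j | e j == x].
have e'K : forall x, x \in A -> e (e' x) = x.
  move=> x /Ae [j <-]; rewrite /e'; case: pickP => [i /eqP //|/(_ j)].
  by rewrite eqxx.
transitivity (\sum_(t : k.-tuple 'I_n | sT t \subset A) G t).
  by rewrite [RHS]big_mkcond; apply: eq_bigr => t _; case: ifP => _;
    rewrite ?mul1r ?mul0r.
rewrite (reindex_onto (fun h : k.-tuple 'I_k => map_tuple e h)
   (fun t : k.-tuple 'I_n => map_tuple e' t)) /=.
  apply: eq_bigl => h; apply/andP; split.
    by apply/fintype.subsetP => y; rewrite /sT inE => /mapP [j _ ->].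
  apply/eqP/val_inj => /=; rewrite -map_comp; apply: map_id_in => j _ /=.
  by apply: ie; rewrite e'K.
move=> t /fintype.subsetP tA; apply: val_inj => /=; rewrite -map_comp.
by apply: map_id_in => x xt /=; apply: e'K; apply: tA; rewrite /sT inE.
Qed.

Lemma card_map_set (e : 'I_k -> 'I_n) (h : k.-tuple 'I_k) : injective e ->
  #|sT (map_tuple e h)| = #|[set y in tval h]|.
Proof. by move=> ie; rewrite /sT /= set_map_inj card_imset. Qed.

Lemma lamA (A : {set 'I_n}) : #|A| = k -> \sum_(t : k.-tuple 'I_n) Kw A t = Lam.
Proof.
move=> /enum_param [e [ie _ eA Ae]].
rewrite /Kw (reindexA ie eA Ae (fun t => ((Nc #|sT t|)%:R)^-1)).
by apply: eq_bigr => h _; rewrite card_map_set.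
Qed.

Lemma meanA (A : {set 'I_n}) x : #|A| = k ->
  \sum_(t : k.-tuple 'I_n) Kw A t * empirical R f t x =
  Lam * empirical R f (enum A) x.
Proof.
move=> /enum_param [e [ie -> eA Ae]].
under eq_bigr => t _ do rewrite /Kw -mulrA.
rewrite (reindexA ie eA Ae (fun t => ((Nc #|sT t|)%:R)^-1 * empirical R f t x)).
under eq_bigr => h _ do rewrite card_map_set // /empirical /= count_map size_map
  size_tuple mulrA.
rewrite /empirical count_map size_map size_enum_ord mulrA -mulr_suml.
by rewrite (sym_count (fun m => ((Nc m)%:R)^-1 : R)).
Qed.

Lemma LamC : Lam * ('C(n, k))%:R = (n ^ k)%:R.
Proof.
have E : \sum_(A : {set 'I_n} | #|A| == k) \sum_(t : k.-tuple 'I_n) Kw A t =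
         (n ^ k)%:R.
  rewrite exchange_big /=.
  under eq_bigr => t _ do rewrite rowK.
  by rewrite sumr_const card_tuple card_ord.
rewrite -E; under [RHS]eq_bigr => A /eqP hA do rewrite lamA //.
have Cn : 'C(n, k) = #|[set A : {set 'I_n} | #|A| == k]|.
  by rewrite card_draws card_ord.
rewrite Cn -sum1dep_card natr_sum mulr_sumr.
by apply: eq_bigr => A _; rewrite mulr1.
Qed.

Lemma Lam_gt0 : 0 < Lam.
Proof.
have L0 : 0 <= Lam by apply: sumr_ge0 => h _; rewrite invr_ge0.
rewrite lt0r L0 andbT; apply/eqP => E; move: LamC; rewrite E mul0r => /eqP.
rewrite eq_sym pnatr_eq0 => /eqP E0; move: (expn_gt0 n k).
by rewrite E0 n_gt0.
Qed.

Lemma stepA (d : T -> T -> R) (d0 : forall x y, 0 <= d x y) (A : {set 'I_n}) :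
  #|A| = k ->
  Lam * W1 d (empirical R f (enum 'I_n)) (empirical R f (enum A)) <=
  \sum_(t : k.-tuple 'I_n) Kw A t * W1 d (empirical R f (enum 'I_n)) (empirical R f t).
Proof.
move=> hA.
have Lg := Lam_gt0; have Ln : Lam != 0 by rewrite gt_eqF.
have H : W1 d (empirical R f (enum 'I_n)) (empirical R f (enum A)) <=
   \sum_(t : k.-tuple 'I_n | predT t) (Kw A t / Lam) *
      W1 d (empirical R f (enum 'I_n)) (empirical R f t).
  apply: (@W1_convex R T d d0 _ predT (fun t : k.-tuple 'I_n => Kw A t / Lam)
    (fun t => empirical R f (tval t))).
- by move=> t _; rewrite divr_ge0 ?Kw_ge0 // ltW.
- by rewrite -mulr_suml lamA // mulfV.
- move=> y; under eq_bigr => t _ do rewrite mulrAC.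
  by rewrite -mulr_suml meanA // mulrC mulKf.
- move=> t _; apply: coupling_ex; first by rewrite size_enum_ord n_gt0.
  by rewrite size_tuple.
rewrite -(ler_pM2l Lg) in H; apply: (le_trans H).
  rewrite mulr_sumr; rewrite le_eqVlt; apply/orP; left; apply/eqP/eq_bigr => t _.
  by rewrite mulrA mulrCA mulfV // mulr1.
Qed.

End Main.

Unset Implicit Arguments.

Theorem lemma2p3 (R : realType) (T : Type) (d : T -> T -> R)
  (hd : is_metric d) (n k : nat) (f : 'I_n -> T)
  (hk1 : (1 <= k)%N) (hkn : (k <= n)%N) :
  EW_without d k f <= EW_with d k f.
Proof.
have d0 : forall x y, 0 <= d x y.
  case: hd => dxx _ dsym tri x y; have := tri x y x.
  by rewrite dxx (dsym y x) => H; lra.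
rewrite /EW_without /EW_with.
set mu := empirical R f (enum 'I_n).
have Lg := Lam_gt0 R hk1 hkn.
have key : Lam R n k * \sum_(A : {set 'I_n} | #|A| == k) W1 d mu (empirical R f (enum A))
   <= \sum_(t : k.-tuple 'I_n) W1 d mu (empirical R f t).
  rewrite mulr_sumr.
  apply: le_trans (_ : \sum_(A : {set 'I_n} | #|A| == k) \sum_(t : k.-tuple 'I_n)
      Kw R A t * W1 d mu (empirical R f t) <= _).
    by apply: ler_sum => A /eqP hA; apply: stepA.
  rewrite exchange_big /=; rewrite le_eqVlt; apply/orP; left; apply/eqP/eq_bigr => t _.
  by rewrite -mulr_suml rowK // mul1r.
rewrite -(LamC R hk1 hkn) invfM mulrA.
apply: ler_wpM2r; first by rewrite invr_ge0.
by rewrite ler_pdivlMr // mulrC.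
Qed.
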